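(* Consider a PWA system, as defined in the context, satisfying (A1)–(A4) with known global dynamical relative degree $\mu\ge1$. Then the inverse system with $u_k$ as output is given by the implicit, anticausal system $$x_{k+1}=\overline{\mathbf{A}}_k x_k+\overline{\mathbf{B}}_k y_{k+\mu}+\overline{\mathbf{F}}_k-\mathbf{B}_k\mathcal{D}_k^{-1}\Psi_k(u_{k+1},\dots,u_{k+\mu-1}),$$ $$u_k=\overline{\mathbf{C}}_k x_k+\overline{\mathbf{D}}_k y_{k+\mu}+\overline{\mathbf{G}}_k-\mathcal{D}_k^{-1}\Psi_k(u_{k+1},\dots,u_{k+\mu-1}),$$ where $\overline{\mathbf{D}}_k=\mathcal{D}_k^{-1}$, $\overline{\mathbf{C}}_k=-\overline{\mathbf{D}}_k\mathcal{C}_k$, $\overline{\mathbf{G}}_k=-\overline{\mathbf{D}}_k\mathcal{G}_k$, $\overline{\mathbf{A}}_k=\mathbf{A}_k+\mathbf{B}_k\overline{\mathbf{C}}_k$, $\overline{\mathbf{B}}_k=\mathbf{B}_k\overline{\mathbf{D}}_k$, $\overline{\mathbf{F}}_k=\mathbf{F}_k+\mathbf{B}_k\overline{\mathbf{G}}_k$, and $\mathcal{C}_k=\mathbf{C}_{k+\mu}\prod_{m=0}^{\mu-1}\mathbf{A}_{k+m}$, $\mathcal{D}_k=\mathbf{C}_{k+\mu}\big(\prod_{m=1}^{\mu-1}\mathbf{A}_{k+m}\big)\mathbf{B}_k$, $\mathcal{G}_k=\mathbf{C}_{k+\mu}\sum_{s=0}^{\mu-1}\big(\prod_{m=s+1}^{\mu-1}\mathbf{A}_{k+m}\big)\mathbf{F}_{k+s}+\mathbf{G}_{k+\mu}$,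 $\Psi_k(u_{k+1},\dots,u_{k+\mu-1})=\mathbf{C}_{k+\mu}\sum_{s=1}^{\mu-1}\big(\prod_{m=s+1}^{\mu-1}\mathbf{A}_{k+m}\big)\mathbf{B}_{k+s}u_{k+s}$ (products ordered with largest index $m$ on the left, empty products equal to the identity, empty sums equal to $0$). In general this inverse is implicit: there exist such systems for which the equation for $y_{k+\mu}$ does not have a unique solution $u_k$, so no explicit formula for $u_k$ exists.
   Context: A discrete-time piecewise affine (PWA) system is $x_{k+1}=\mathbf{A}_k x_k+\mathbf{B}_k u_k+\mathbf{F}_k$, $y_k=\mathbf{C}_k x_k+\mathbf{D}_k u_k+\mathbf{G}_k$, $k\in\mathbb{Z}$, with state $x_k\in\mathbb{R}^{n_x}$, input $u_k\in\mathbb{R}^{n_u}$, output $y_k\in\mathbb{R}^{n_y}$. For each $M\in\{A,B,F,C,D,G\}$, $\mathbf{M}_k=\sum_{q=1}^{|Q|} M_{q,k}K_q(\delta_k)$, where the $M_{q,k}$ are real matrices (possibly time-varying), $\delta_k=\delta(x_k)=H(Px_k-\theta)$ with $H$ the elementwise Heaviside step function, $P\in\mathbb{R}^{n_P\times n_x}$, $\theta\in\mathbb{R}^{n_P}$, and $K_q(\delta)=1$ if $\delta\in\Delta^*_q$ and $0$ otherwise ($\Delta^*_q$ a set of binary vectors). The locations $Q_q=\{x:\delta(x)\in\Delta^*_q\}$ are disjoint, have union $\mathbb{R}^{n_x}$, and each is a union of disjoint convex polytopes. Note that $\mathbf{M}_{k+m}$ depends on $x_{k+m}$, which for $m\ge1$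 depends on $u_k$. The $q$-th component model is the affine system with matrices $A_{q,k},\dots,G_{q,k}$ and relative degree $\mu_q$ (number of time steps for an input value to influence the output). Global dynamical relative degree: the smallest integer $\mu\ge 0$ such that the explicit expression of $y_{k+\mu}$ in terms of the component matrices, the selector functions $K_q$, $x_k$ and $u_i$ ($i\ge k$) contains $u_k$ outside of a selector function for every switching sequence on time steps $k,\dots,k+\mu$. Assumptions: (A1) $x_0$ lies in the set of initial conditions from which every location is reachable in finite time; (A2) single-input single-output; (A3) switching depends only on the state, not the input; (A4) all component models have the same relative degree $\mu_c$ for all $q$ and $k$. A system is anticausal if computing the current output requires future input values. *)

(* Defs.v *)
From HB Require Import structures.
From mathcomp Require Import all_boot all_order all_algebra.
From mathcomp Require Import reals.
Set Implicit Arguments. Unset Strict Implicit. Unset Printing Implicit Defensive.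
Import Order.TTheory GRing.Theory Num.Theory.
Local Open Scope ring_scope.

(* A SISO discrete-time PWA system with n_x states, n_P hyperplanes and
   |Q| = nQ locations.  Time k ranges over int. *)
Record pwa (R : realType) (nx nP nQ : nat) := PWA {
  Aq : 'I_nQ -> int -> 'M[R]_nx;
  Bq : 'I_nQ -> int -> 'cV[R]_nx;
  Fq : 'I_nQ -> int -> 'cV[R]_nx;
  Cq : 'I_nQ -> int -> 'rV[R]_nx;
  Dq : 'I_nQ -> int -> R;
  Gq : 'I_nQ -> int -> R;
  Pm : 'M[R]_(nP, nx);
  theta : 'cV[R]_nP;
  Dstar : 'I_nQ -> pred {ffun 'I_nP -> bool}
}.

Section PWA.
Variables (R : realType) (nx nP nQ : nat) (S : pwa R nx nP nQ).

Definition delta (x : 'cV[R]_nx) : {ffun 'I_nP -> bool} :=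
  [ffun i => 0 <= (Pm S *m x - theta S) i 0].

Definition Ksel (q : 'I_nQ) (x : 'cV[R]_nx) : R := (Dstar S q (delta x))%:R.

Definition pwa_wf : Prop := forall x : 'cV[R]_nx, exists! q, Dstar S q (delta x).

Definition Abold k x : 'M[R]_nx := \sum_(q < nQ) Ksel q x *: Aq S q k.
Definition Bbold k x : 'cV[R]_nx := \sum_(q < nQ) Ksel q x *: Bq S q k.
Definition Fbold k x : 'cV[R]_nx := \sum_(q < nQ) Ksel q x *: Fq S q k.
Definition Cbold k x : 'rV[R]_nx := \sum_(q < nQ) Ksel q x *: Cq S q k.
Definition Dbold k x : R := \sum_(q < nQ) Ksel q x * Dq S q k.
Definition Gbold k x : R := \sum_(q < nQ) Ksel q x * Gq S q k.

Definition step k (x : 'cV[R]_nx) (u : R) : 'cV[R]_nx :=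
  Abold k x *m x + u *: Bbold k x + Fbold k x.
Definition out k (x : 'cV[R]_nx) (u : R) : R :=
  (Cbold k x *m x) 0 0 + Dbold k x * u + Gbold k x.

Definition is_traj (x : int -> 'cV[R]_nx) (u y : int -> R) : Prop :=
  forall k : int, x (k + 1) = step k (x k) (u k) /\ y k = out k (x k) (u k).

Fixpoint sim (k0 : int) (x0 : 'cV[R]_nx) (w : int -> R) (n : nat) : 'cV[R]_nx :=
  match n with
  | 0 => x0
  | n'.+1 => step (k0 + n'%:Z) (sim k0 x0 w n') (w (k0 + n'%:Z))
  end.

Definition A1 (x0 : 'cV[R]_nx) : Prop :=
  forall q : 'I_nQ, exists (w : int -> R) (N : nat),
    Dstar S q (delta (sim 0 x0 w N)).

Fixpoint lprod (f : nat -> 'M[R]_nx) (lo cnt : nat) : 'M[R]_nx :=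
  match cnt with
  | 0 => 1%:M
  | c.+1 => f (lo + c)%N *m lprod f lo c
  end.

(* coefficient of u_k in y_{k+j} for the q-th affine component model *)
Definition markov_comp (q : 'I_nQ) (k : int) (j : nat) : R :=
  if j is 0 then Dq S q k else
  (Cq S q (k + j%:Z) *m lprod (fun m => Aq S q (k + m%:Z)) 1 j.-1 *m Bq S q k) 0 0.

Definition comp_reldeg (q : 'I_nQ) (k : int) (mu : nat) : Prop :=
  (forall j, (j < mu)%N -> markov_comp q k j = 0) /\ markov_comp q k mu != 0.

Definition A4 : Prop := exists muc : nat, forall q k, comp_reldeg q k muc.

(* coefficient of u_k (outside selector functions) in the explicit expression
   of y_{k+j} along the switching sequence sigma (sigma m = location at k+m) *)
Definition coef_switch (k : int) (sigma : nat -> 'I_nQ) (j : nat) : R :=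
  if j is 0 then Dq S (sigma 0%N) k else
  (Cq S (sigma j) (k + j%:Z)
     *m lprod (fun m => Aq S (sigma m) (k + m%:Z)) 1 j.-1
     *m Bq S (sigma 0%N) k) 0 0.

Definition contains_uk (j : nat) : Prop :=
  forall (k : int) (sigma : nat -> 'I_nQ), coef_switch k sigma j != 0.

Definition global_reldeg (mu : nat) : Prop :=
  contains_uk mu /\ forall j, (j < mu)%N -> ~ contains_uk j.

Section Inverse.
Variables (x : int -> 'cV[R]_nx) (u : int -> R) (mu : nat).
Let Ab (k : int) := Abold k (x k).
Let Bb (k : int) := Bbold k (x k).
Let Fb (k : int) := Fbold k (x k).
Let Cb (k : int) := Cbold k (x k).
Let Gb (k : int) := Gbold k (x k).

Definition calC k : 'rV[R]_nx :=
  Cb (k + mu%:Z) *m lprod (fun m => Ab (k + m%:Z)) 0 mu.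
Definition calD k : R :=
  (Cb (k + mu%:Z) *m lprod (fun m => Ab (k + m%:Z)) 1 mu.-1 *m Bb k) 0 0.
Definition calG k : R :=
  (Cb (k + mu%:Z) *m \sum_(s < mu)
       (lprod (fun m => Ab (k + m%:Z)) s.+1 (mu.-1 - s) *m Fb (k + s%:Z))) 0 0
  + Gb (k + mu%:Z).
Definition Psi k : R :=
  (Cb (k + mu%:Z) *m \sum_(1 <= s < mu)
       (lprod (fun m => Ab (k + m%:Z)) s.+1 (mu.-1 - s)
          *m (u (k + s%:Z) *: Bb (k + s%:Z)))) 0 0.

Definition Dbar k : R := (calD k)^-1.
Definition Cbar k : 'rV[R]_nx := - (Dbar k *: calC k).
Definition Gbar k : R := - (Dbar k * calG k).
Definition Abar k : 'M[R]_nx := Ab k + Bb k *m Cbar k.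
Definition Bbar k : 'cV[R]_nx := Dbar k *: Bb k.
Definition Fbar k : 'cV[R]_nx := Fb k + Gbar k *: Bb k.
End Inverse.

End PWA.

(* Main.v *)
Require Import Defs.
From HB Require Import structures.
From mathcomp Require Import all_boot all_order all_algebra.
From mathcomp Require Import reals.
From mathcomp Require Import zify ring lra.
Set Implicit Arguments. Unset Strict Implicit. Unset Printing Implicit Defensive.
Import Order.TTheory GRing.Theory Num.Theory.
Local Open Scope ring_scope.

Section H.
Variables (R : realType) (nx nP nQ : nat) (S : pwa R nx nP nQ).

Lemma sum_sel (V : lmodType R) (M : 'I_nQ -> V) q :
  \sum_(q' < nQ) ((q' == q)%:R : R) *: M q' = M q.
Proof.
rewrite (bigD1 q) //= eqxx scale1r big1 ?addr0 // => i /negbTE ->.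
by rewrite scale0r.
Qed.

Lemma Ksel_eq (wf : pwa_wf S) x q : Dstar S q (delta S x) ->
  forall q', Ksel S q' x = (q' == q)%:R.
Proof.
move=> Hq q'; rewrite /Ksel.
case: (wf x) => q0 [H0 U].
have eq1 := U _ Hq.
case: (boolP (Dstar S q' (delta S x))) => H.
  by rewrite -(U _ H) eq1 eqxx.
case: eqP => // E; by rewrite E Hq in H.
Qed.

Lemma mxD00 (A B : 'M[R]_1) : (A + B) 0 0 = A 0 0 + B 0 0.
Proof. by rewrite mxE. Qed.
Lemma mxZ00 a (A : 'M[R]_1) : (a *: A) 0 0 = a * A 0 0.
Proof. by rewrite mxE. Qed.
Lemma mxN00 (A : 'M[R]_1) : (- A) 0 0 = - A 0 0.
Proof. by rewrite mxE. Qed.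

Lemma lprod_ext (f g : nat -> 'M[R]_nx) lo c :
  (forall m, f m = g m) -> lprod f lo c = lprod g lo c.
Proof. by move=> E; elim: c => //= c ->; rewrite E. Qed.

Lemma cV_mul1 (v : 'cV[R]_nx) (s : 'M[R]_1) : v *m s = s 0 0 *: v.
Proof.
apply/matrixP => i j; rewrite !mxE big_ord1 (ord1 j) mulrC; congr (_ * _).
Qed.

Lemma expand (x : int -> 'cV[R]_nx) (u y : int -> R) : is_traj S x u y ->
  forall k n, x (k + n%:Z) =
   lprod (fun m => Abold S (k + m%:Z) (x (k + m%:Z))) 0 n *m x k +
   \sum_(s < n) lprod (fun m => Abold S (k + m%:Z) (x (k + m%:Z))) s.+1 (n.-1 - s)
       *m (u (k + s%:Z) *: Bbold S (k + s%:Z) (x (k + s%:Z)) + Fbold S (k + s%:Z) (x (k + s%:Z))).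
Proof.
move=> T k; elim=> [|n IH].
  by rewrite addr0 big_ord0 /= mul1mx addr0.
have -> : k + n.+1%:Z = (k + n%:Z) + 1 by rewrite -addrA -PoszD addn1.
rewrite (proj1 (T _)) /step {2}IH big_ord_recr /= subnn /= mul1mx add0n.
rewrite mulmxDr mulmxA -!addrA; congr (_ + (_ + _)).
rewrite mulmx_sumr; apply: eq_bigr => s _; rewrite mulmxA; congr (_ *m _).
case: s => s /= Hs.
have -> : (n - s = (n.-1 - s).+1)%N by lia.
by rewrite /=; congr (_ *m _); congr (Abold _ _ (x _)); congr (_ + _%:Z); lia.
Qed.

Lemma yformula (x : int -> 'cV[R]_nx) (u y : int -> R) (mu : nat) :
  is_traj S x u y -> (forall q k, Dq S q k = 0) -> (1 <= mu)%N ->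
  forall k, y (k + mu%:Z) = (calC S x mu k *m x k) 0 0 + calD S x mu k * u k
     + Psi S x u mu k + calG S x mu k.
Proof.
move=> T D0 Hmu k.
have Db0 : Dbold S (k + mu%:Z) (x (k + mu%:Z)) = 0.
  by rewrite /Dbold big1 // => q _; rewrite D0 mulr0.
rewrite (proj2 (T _)) /out Db0 mul0r addr0 /calC /calD /Psi /calG.
have HX := expand T k mu.
case: mu Hmu Db0 HX => // m _ _ HX.
set Cb := Cbold S (k + m.+1%:Z) (x (k + m.+1%:Z)).
set Gb := Gbold S (k + m.+1%:Z) (x (k + m.+1%:Z)).
rewrite HX.
set f := fun m0 : nat => Abold S (k + m0%:Z) (x (k + m0%:Z)).
set P := lprod f 0 m.+1.
rewrite [m.+1.-1]/=.
set B := fun s : int => Bbold S s (x s).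
set F := fun s : int => Fbold S s (x s).
have Hs : \sum_(s < m.+1) lprod f s.+1 (m - s) *m (u (k + s%:Z) *: B (k + s%:Z) + F (k + s%:Z))
  = u k *: (lprod f 1 m *m B k) + \sum_(1 <= s < m.+1) lprod f s.+1 (m - s) *m (u (k + s%:Z) *: B (k + s%:Z))
    + \sum_(s < m.+1) lprod f s.+1 (m - s) *m F (k + s%:Z).
  rewrite (eq_bigr _ (fun s _ => mulmxDr _ _ _)) big_split; congr (_ + _).
  rewrite big_ord_recl subn0 addr0 -scalemxAr; congr (_ + _).
  rewrite big_add1 big_mkord; apply: eq_bigr => i _; by rewrite lift0.
rewrite Hs !mulmxDr -!scalemxAr !mulmxA.
rewrite !mxD00 mxZ00.
by rewrite [u k * _]mulrC !addrA.
Qed.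

Lemma boldA (wf : pwa_wf S) x q k : Dstar S q (delta S x) -> Abold S k x = Aq S q k.
Proof. by move=> H; rewrite /Abold (eq_bigr _ (fun q' _ => congr1 (fun c => c *: _) (Ksel_eq wf H q'))) sum_sel. Qed.
Lemma boldB (wf : pwa_wf S) x q k : Dstar S q (delta S x) -> Bbold S k x = Bq S q k.
Proof. by move=> H; rewrite /Bbold (eq_bigr _ (fun q' _ => congr1 (fun c => c *: _) (Ksel_eq wf H q'))) sum_sel. Qed.
Lemma boldC (wf : pwa_wf S) x q k : Dstar S q (delta S x) -> Cbold S k x = Cq S q k.
Proof. by move=> H; rewrite /Cbold (eq_bigr _ (fun q' _ => congr1 (fun c => c *: _) (Ksel_eq wf H q'))) sum_sel. Qed.

Lemma part1 (mu : nat) :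
     pwa_wf S -> A4 S -> (1 <= mu)%N -> global_reldeg S mu ->
     forall (x : int -> 'cV[R]_nx) (u y : int -> R),
       is_traj S x u y -> A1 S (x 0) ->
       forall k : int,
         calD S x mu k != 0 /\
         x (k + 1) = Abar S x mu k *m x k + y (k + mu%:Z) *: Bbar S x mu k
                     + Fbar S x mu k
                     - ((calD S x mu k)^-1 * Psi S x u mu k) *: Bbold S k (x k) /\
         u k = (Cbar S x mu k *m x k) 0 0 + Dbar S x mu k * y (k + mu%:Z)
               + Gbar S x mu k - (calD S x mu k)^-1 * Psi S x u mu k.
Proof.
move=> wf [muc Hmuc] Hmu [Hc Hlt] x u y T _ k.
have mucP : (0 < muc)%N.
  case: muc Hmuc => // H0; exfalso; apply: (Hlt 0%N Hmu) => k' sigma.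
  exact: (proj2 (H0 (sigma 0%N) k')).
have D0 : forall q k, Dq S q k = 0 by move=> q k'; exact: (proj1 (Hmuc q k') 0%N mucP).
have Dn0 : calD S x mu k != 0.
  case: (wf (x k)) => q0 _.
  pose sigma m := odflt q0 [pick q | Dstar S q (delta S (x (k + m%:Z)))].
  have Hsig : forall m, Dstar S (sigma m) (delta S (x (k + m%:Z))).
    move=> m; rewrite /sigma; case: pickP => [q //|H].
    by case: (wf (x (k + m%:Z))) => q [Hq _]; rewrite H in Hq.
  have := Hc k sigma; rewrite /coef_switch /calD.
  case: mu Hmu {Hc Hlt} => // m _.
  have H0 := Hsig 0%N; rewrite addr0 in H0.
  rewrite (boldC wf _ (Hsig m.+1)) (boldB wf _ H0).
  by rewrite (lprod_ext _ _ (fun j => boldA wf _ (Hsig j))).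
have Y := yformula T D0 Hmu k.
set D := calD S x mu k in Dn0 Y *.
set c := (calC S x mu k *m x k) 0 0 in Y.
set P := Psi S x u mu k in Y *.
set G := calG S x mu k in Y.
have Hu : u k = (Cbar S x mu k *m x k) 0 0 + Dbar S x mu k * y (k + mu%:Z)
               + Gbar S x mu k - D^-1 * P.
  rewrite /Cbar /Gbar /Dbar -/D -/G mulNmx -scalemxAl mxN00 mxZ00 -/c Y.
  by field.
split => //; split => //.
rewrite (proj1 (T k)) /step /Abar /Bbar /Fbar mulmxDl -mulmxA cV_mul1 scalerA.
rewrite Hu -/D !scalerBl !scalerDl [y _ * _]mulrC /Dbar -/D.
rewrite -!addrA; congr (_ + (_ + (_ + _))).
by rewrite /Gbar -/D scaleNr addrA addrC.
Qed.
End H.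

Section Ex.
Variable R : realType.

Definition exS : pwa R 1 1 2 :=
  @PWA R 1 1 2 (fun _ _ => 0) (fun _ _ => const_mx 1) (fun _ _ => 0)
    (fun _ _ => const_mx 1) (fun _ _ => 0)
    (fun q _ => if q == ord_max then -2 else 0) (const_mx 1) 0
    (fun q => [pred d : {ffun 'I_1 -> bool} | d ord0 == (val q == 1%N)]).

Definition locq (x : 'cV[R]_1) : 'I_2 := if 0 <= x 0 0 then ord_max else ord0.

Lemma delta_ex x : delta exS x ord0 = (0 <= x 0 0).
Proof. by rewrite /delta ffunE !mxE big_ord1 !mxE mul1r subr0. Qed.

Lemma Dstar_ex q x : Dstar exS q (delta exS x) = (q == locq x).
Proof.
rewrite /= delta_ex /locq.
case: (0 <= x 0 0); case: q => [[|[|n]] Hn] //=.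
Qed.

Lemma wf_ex : pwa_wf exS.
Proof.
move=> x; exists (locq x); split; first by rewrite Dstar_ex.
by move=> q; rewrite Dstar_ex => /eqP.
Qed.

Lemma Ksel_ex q x : Ksel exS q x = (q == locq x)%:R.
Proof. by rewrite /Ksel Dstar_ex. Qed.

Lemma step_ex k x u : step exS k x u = u *: const_mx 1.
Proof.
rewrite /step /Abold /Bbold /Fbold.
rewrite big1 ?mul0mx ?add0r; last by move=> q _; rewrite scaler0.
rewrite addr0.
congr (_ *: _).
rewrite (bigD1 (locq x)) //= Ksel_ex eqxx scale1r big1 ?addr0 // => i /negbTE H.
by rewrite Ksel_ex H scale0r.
Qed.

Lemma out_ex k x u : out exS k x u = x 0 0 + (if 0 <= x 0 0 then -2 else 0).
Proof.
rewrite /out /Cbold /Dbold /Gbold.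
rewrite [\sum_(q < 2) _ * _]big1 ?mul0r ?addr0; last by move=> q _; rewrite mulr0.
rewrite (bigD1 (locq x)) //= Ksel_ex eqxx scale1r big1 ?addr0; last first.
  by move=> i /negbTE H; rewrite Ksel_ex H scale0r.
rewrite (bigD1 (locq x)) //= Ksel_ex eqxx mul1r big1 ?addr0; last first.
  by move=> i /negbTE H; rewrite Ksel_ex H mul0r.
rewrite !mxE big_ord1 mxE mul1r; congr (_ + _).
by rewrite /locq; case: (0 <= x 0 0).
Qed.

Lemma part2 :
  (exists (nx nP nQ : nat) (S : pwa R nx nP nQ) (mu : nat),
     [/\ pwa_wf S, A4 S, (1 <= mu)%N & global_reldeg S mu] /\
     exists (x0 : 'cV[R]_nx) (w : int -> R) (k : nat) (v : R),
       [/\ A1 S x0, v != w k%:Z &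
           let w' := fun i : int => if i == k%:Z then v else w i in
           out S (k%:Z + mu%:Z) (sim S 0 x0 w' (k + mu)) (w' (k%:Z + mu%:Z))
           = out S (k%:Z + mu%:Z) (sim S 0 x0 w (k + mu)) (w (k%:Z + mu%:Z))]).
Proof.
have M1 : forall q k, (Cq exS q k *m lprod (fun m => Aq exS q (k + m%:Z)) 1 0 *m Bq exS q k) 0 0 = 1.
  by move=> q k; rewrite /= mulmx1 !mxE big_ord1 !mxE mulr1.
exists 1%N, 1%N, 2%N, exS, 1%N; split.
  split => //.
  - exact: wf_ex.
  - exists 1%N => q k; split; last by rewrite /markov_comp M1 oner_neq0.
    by case=> [|//] _.
  - split.
      move=> k sigma; rewrite /coef_switch /=.
      by rewrite mulmx1 !mxE big_ord1 !mxE mulr1 oner_neq0.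
    case=> [|//] _ /(_ 0 (fun _ => ord0)); by rewrite /coef_switch /= eqxx.
exists 0, (fun _ => 1), 0%N, (-1); split.
- move=> q; exists (fun _ => if q == ord_max then 1 else -1), 1%N.
  rewrite Dstar_ex /= step_ex /locq !mxE.
  case: q => [[|[|n]] Hn] //=; rewrite mulr1 ?ler0N1 ?ler01; apply/eqP; exact: val_inj.
- apply/eqP => H; have : (-1 : R) < 1 by lra.
  by rewrite H ltxx.
- rewrite /= !step_ex !out_ex !mxE /=.
  rewrite !mulr1 ler0N1 ler01; lra.
Qed.
End Ex.

Theorem theorem2 (R : realType) :
  (forall (nx nP nQ : nat) (S : pwa R nx nP nQ) (mu : nat),
     pwa_wf S -> A4 S -> (1 <= mu)%N -> global_reldeg S mu ->
     forall (x : int -> 'cV[R]_nx) (u y : int -> R),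
       is_traj S x u y -> A1 S (x 0) ->
       forall k : int,
         calD S x mu k != 0 /\
         x (k + 1) = Abar S x mu k *m x k + y (k + mu%:Z) *: Bbar S x mu k
                     + Fbar S x mu k
                     - ((calD S x mu k)^-1 * Psi S x u mu k) *: Bbold S k (x k) /\
         u k = (Cbar S x mu k *m x k) 0 0 + Dbar S x mu k * y (k + mu%:Z)
               + Gbar S x mu k - (calD S x mu k)^-1 * Psi S x u mu k)
  /\
  (exists (nx nP nQ : nat) (S : pwa R nx nP nQ) (mu : nat),
     [/\ pwa_wf S, A4 S, (1 <= mu)%N & global_reldeg S mu] /\
     exists (x0 : 'cV[R]_nx) (w : int -> R) (k : nat) (v : R),
       [/\ A1 S x0, v != w k%:Z &
           let w' := fun i : int => if i == k%:Z then v else w i in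
           out S (k%:Z + mu%:Z) (sim S 0 x0 w' (k + mu)) (w' (k%:Z + mu%:Z))
           = out S (k%:Z + mu%:Z) (sim S 0 x0 w (k + mu)) (w (k%:Z + mu%:Z))]).
Proof.
split.
  move=> nx nP nQ S mu wf a4 hmu gr x u y T a1 k.
  exact: (part1 wf a4 hmu gr T a1 k).
exact: part2.
Qed.
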